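(* Let $(\mathbf X_1,\mathbf Y_1)$, $(\mathbf X_2,\mathbf Y_2)$ be general correlated sources and $(\mathbf X,\mathbf Y)$ the mixture $P_{X^nY^n}=\alpha_1P_{X_1^nY_1^n}+\alpha_2P_{X_2^nY_2^n}$ with $\alpha_1,\alpha_2>0$, $\alpha_1+\alpha_2=1$. If for both $i=1,2$ the sequence $\{\frac1n\log\frac1{P_{X_i^n|Y_i^n}(X_i^n|Y_i^n)}\}_{n\ge1}$ satisfies Condition (W), then $\{\frac1n\log\frac1{P_{X^n|Y^n}(X^n|Y^n)}\}_{n\ge1}$ also satisfies Condition (W).
   Context: A general correlated source $\{(X^n,Y^n)\}_{n\ge1}$ is an arbitrary sequence of pairs of random variables on $\mathcal X^n\times\mathcal Y^n$, $\mathcal X,\mathcal Y$ finite or countably infinite (no structural assumptions; marginal probabilities positive). Logs base 2. A sequence $\{Z_n\}$ of discrete real random variables ($Z_n$ taking values in a countable set $\mathcal Z_n$) satisfies Condition (W) if: (i) there is $M<\infty$ with $\mathbb E[Z_n]<M$ for all $n$; and (ii) whenever subsets $\mathcal A_n\subseteq\mathcal Z_n$ satisfy $P_{Z_n}(\mathcal A_n)\to0$, then $\lim_n\sum_{z\in\mathcal A_n}P_{Z_n}(z)|z|=0$. *)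

(* Defs.v *)
From HB Require Import structures.
From mathcomp Require Import all_boot all_order all_algebra.
From mathcomp Require Import all_classical all_reals all_analysis.
Set Implicit Arguments. Unset Strict Implicit. Unset Printing Implicit Defensive.
Import Order.TTheory GRing.Theory Num.Theory.
Local Open Scope classical_set_scope.
Local Open Scope ring_scope.

Section Defs.
Variable R : realType.

Definition log2 (x : R) : R := ln x / ln 2.

(** Discrete random variable Z = f(T), T with pmf p on a countable type:
    distribution P_Z(z) and P_Z(A) (pushforward). *)
Definition distZ (T : choiceType) (p : T -> R) (f : T -> R) (z : R) : \bar R :=
  \esum_(t in f @^-1` [set z]) (p t)%:E.
Definition probZ (T : choiceType) (p : T -> R) (f : T -> R) (A : set R) : \bar R :=
  \esum_(t in f @^-1` A) (p t)%:E.

Definition expZ (T : choiceType) (p : T -> R) (f : T -> R) : \bar R :=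
  (\esum_(z in range f) (distZ p f z * (Num.max z 0)%:E) -
   \esum_(z in range f) (distZ p f z * (Num.max (- z) 0)%:E))%E.

(** Condition (W) for a sequence of discrete random variables
    Z_k = f k (T_k), T_k ~ p k on a countable type Tk k. *)
Definition condW (Tk : nat -> countType) (p : forall k, Tk k -> R)
    (f : forall k, Tk k -> R) : Prop :=
  (exists M : R, forall k, (expZ (p k) (f k) < M%:E)%E) /\
  (forall A : nat -> set R, (forall k, A k `<=` range (f k)) ->
     (fun k => probZ (p k) (f k) (A k)) @ \oo --> 0%E ->
     (fun k => (\esum_(z in A k) (distZ (p k) (f k) z * (`|z|)%:E))%E) @ \oo --> 0%E).

(** A general correlated source: for each n a pmf on X^n x Y^n. *)
Definition src_type (X Y : countType) (n : nat) : countType :=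
  (n.-tuple X * n.-tuple Y)%type.

Definition margX (X Y : countType) n (P : src_type X Y n -> R) (x : n.-tuple X) : R :=
  fine (\esum_(y in [set: n.-tuple Y]) (P (x, y))%:E).
Definition margY (X Y : countType) n (P : src_type X Y n -> R) (y : n.-tuple Y) : R :=
  fine (\esum_(x in [set: n.-tuple X]) (P (x, y))%:E).

Definition is_source (X Y : countType) (P : forall n, src_type X Y n -> R) : Prop :=
  forall n,
    (forall t, 0 <= P n t) /\
    (\esum_(t in [set: src_type X Y n]) (P n t)%:E = 1)%E /\
    (forall x, 0 < margX (P n) x) /\ (forall y, 0 < margY (P n) y).

Definition condP (X Y : countType) n (P : src_type X Y n -> R) (t : src_type X Y n) : R :=
  P t / margY P t.2.

(** the spectral variable (1/n) log 1/P_{X^n|Y^n}(X^n|Y^n), for n = k+1 *)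
Definition entr_info (X Y : countType) (P : forall n, src_type X Y n -> R)
    (k : nat) (t : src_type X Y k.+1) : R :=
  (k.+1%:R)^-1 * log2 (condP (P k.+1) t)^-1.

Definition entr_seq_W (X Y : countType) (P : forall n, src_type X Y n -> R) : Prop :=
  condW (fun k => P k.+1) (entr_info P).

Definition mixture (X Y : countType) (a1 a2 : R) (P1 P2 : forall n, src_type X Y n -> R) :
  forall n, src_type X Y n -> R :=
  fun n t => a1 * P1 n t + a2 * P2 n t.

End Defs.

(* Main.v *)
Require Import Defs.
From HB Require Import structures.
From mathcomp Require Import all_boot all_order all_algebra.
From mathcomp Require Import all_classical all_reals all_analysis.
From mathcomp Require Import ring lra.
Import Order.TTheory GRing.Theory Num.Theory.
Local Open Scope classical_set_scope.
Local Open Scope ring_scope.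

Section EsumH.
Context {R : realType}.
Local Open Scope ereal_scope.

Lemma esumZ_ (T : choiceType) (S : set T) (a : T -> \bar R) (r : R) :
  (0 <= r)%R -> (forall t, S t -> 0 <= a t) ->
  \esum_(t in S) (r%:E * a t) = r%:E * esum S a.
Proof.
move=> r0 a0.
rewrite esum_mkcond [X in _ = _ * X]esum_mkcond.
have -> : \esum_(i in [set: T]) (if i \in S then r%:E * a i else 0)
  = \esum_(i in [set: T]) (r%:E * (if i \in S then a i else 0)).
  by apply: eq_esum => i _; case: ifP => //; rewrite mule0.
set b := fun i => if i \in S then a i else 0.
have b0 : forall i, 0 <= b i by move=> i; rewrite /b; case: ifPn => // /set_mem /a0.
rewrite /esum -ereal_supZl //; last first.
  by apply/set0P; exists 0; exists set0; [exact: fsets_set0|rewrite fsbig_set0].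
congr ereal_sup; apply/seteqP; split => x /=.
  by move=> [A fA <-]; exists (\sum_(i \in A) b i) => //; [exists A|rewrite ge0_mule_fsumr].
by move=> [y [A fA <-] <-]; exists A => //; rewrite ge0_mule_fsumr.
Qed.

Lemma esum_subset (T : choiceType) (A B : set T) (a : T -> \bar R) :
  A `<=` B -> (forall t, B t -> 0 <= a t) ->
  \esum_(t in A) a t <= \esum_(t in B) a t.
Proof.
move=> AB a0; rewrite esum_mkcond [X in _ <= X]esum_mkcond.
apply: le_esum => i _; case: ifPn => iA; first by rewrite (mem_set (AB _ (set_mem iA))).
by case: ifPn => // /set_mem /a0.
Qed.

Lemma esum_partition (T : choiceType) (f : T -> R) (S : set R) (a : T -> \bar R) :
  (forall t, S (f t) -> 0 <= a t) ->
  \esum_(z in S) \esum_(t in f @^-1` [set z]) a t = \esum_(t in f @^-1` S) a t.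
Proof.
move=> a0; rewrite esum_esum; last by move=> z t Sz /= ftz; apply: a0; rewrite ftz.
rewrite (reindex_esum (f @^-1` S) _ (fun t => (f t, t))) //.
split.
- by move=> t /= St; split.
- by move=> t1 t2 _ _ [].
- move=> [z t] /= [Sz ftz]; exists t => //=; first by rewrite /preimage/= ftz.
  by rewrite ftz.
Qed.

Lemma distZ_mul (T : choiceType) (p : T -> R) (f : T -> R) (S : set R) (g : R -> R) :
  (forall t, 0 <= p t)%R -> (forall z, S z -> 0 <= g z)%R ->
  \esum_(z in S) (distZ p f z * (g z)%:E) = \esum_(t in f @^-1` S) (p t * g (f t))%:E.
Proof.
move=> p0 g0.
rewrite -esum_partition; last first.
  by move=> t /g0 ?; rewrite lee_fin mulr_ge0.
apply: eq_esum => z Sz.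
rewrite /distZ muleC -esumZ_ //; last by move=> t _; rewrite lee_fin.
  by apply: eq_esum => t /= ->; rewrite muleC EFinM.
exact: g0.
Qed.
End EsumH.

Section UI.
Context {R : realType}.
Local Open Scope ereal_scope.

Lemma expZ_ge0 (T : choiceType) (p f : T -> R) :
  (forall t, 0 <= p t)%R -> (forall t, 0 <= f t)%R ->
  expZ p f = \esum_(t in [set: T]) (p t * f t)%:E.
Proof.
move=> p0 f0; rewrite /expZ.
rewrite [X in _ - X](esum1 (D := range f)); last first.
  move=> z [t _ <-]; rewrite max_r ?mule0 //.
  by rewrite oppr_le0.
rewrite sube0 distZ_mul //; last by move=> z _; rewrite le_max lexx orbT.
have -> : f @^-1` range f = [set: T] by apply/seteqP; split => t //= _; exists t.
by apply: eq_esum => t _; rewrite max_l.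
Qed.
End UI.

Section UI.
Context {R : realType}.
Local Open Scope ereal_scope.

Lemma split_bound (T : choiceType) (p f : T -> R) (E B : set T) (C : R) :
  (forall t, 0 <= p t)%R -> (forall t, 0 <= f t)%R ->
  (forall t, (C < f t)%R -> B t) -> (0 <= C)%R ->
  \esum_(t in E) (p t * f t)%:E <=
  C%:E * (\esum_(t in E) (p t)%:E) + \esum_(t in B) (p t * f t)%:E.
Proof.
move=> p0 f0 hB C0.
have pf0 t : 0 <= (p t * f t)%:E by rewrite lee_fin mulr_ge0.
rewrite -esumZ_ //; last by move=> t _; rewrite lee_fin.
rewrite esum_mkcond [X in X + _]esum_mkcond [X in _ + X]esum_mkcond -esumD; last 2 first.
- by move=> t _; case: ifP => // _; rewrite -EFinM lee_fin mulr_ge0.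
- by move=> t _; case: ifP.
apply: le_esum => t _; case: ifPn => tE; last by rewrite add0e; case: ifP.
have [fC|Cf] := leP (f t) C.
  rewrite (@le_trans _ _ (C%:E * (p t)%:E)) ?leeDl //; last by case: ifP.
  by rewrite -EFinM lee_fin mulrC ler_wpM2r.
by rewrite (mem_set (hB _ Cf)) leeDr // mule_ge0 // lee_fin.
Qed.

End UI.

Section UI.
Context {R : realType}.
Local Open Scope ereal_scope.

Lemma UI_lemma (Tk : nat -> countType) (p f : forall k, Tk k -> R)
  (E : forall k, set (Tk k)) :
  condW p f -> (forall k t, 0 <= p k t)%R -> (forall k t, 0 <= f k t)%R ->
  (fun k => \esum_(t in E k) (p k t)%:E) @ \oo --> 0 ->
  (fun k => \esum_(t in E k) (p k t * f k t)%:E) @ \oo --> 0.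
Proof.
move=> [[M HM] W2] p0 f0 Ecvg.
have HM' k : \esum_(t in [set: Tk k]) (p k t * f k t)%:E <= M%:E.
  by rewrite -expZ_ge0 // ltW.
pose pi k := \esum_(t in E k) (p k t)%:E.
have pi0 k : 0 <= pi k by apply: esum_ge0 => t _; rewrite lee_fin.
pose r k := fine (pi k).
have r0 k : (0 <= r k)%R by rewrite /r fine_ge0.
pose q k := (r k + k.+1%:R^-1)%R.
have q0 k : (0 < q k)%R by rewrite /q ltr_wpDl // invr_gt0 ltr0n.
pose s k := Num.sqrt (q k).
have s0 k : (0 < s k)%R by rewrite /s sqrtr_gt0.
have ss k : (s k * s k = q k)%R by rewrite /s -expr2 sqr_sqrtr // ltW.
pose C k := ((s k)^-1)%R.
have C0 k : (0 < C k)%R by rewrite /C invr_gt0.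
move/fine_cvgP : Ecvg => [Efin rcvg].
have qcvg : q k @[k --> \oo] --> 0%R.
  rewrite -[0%R]addr0; apply: cvgD; first exact: rcvg.
  exact: (@cvg_harmonic R).
have scvg : s k @[k --> \oo] --> 0%R.
  rewrite -sqrtr0; apply: (cvg_comp q (@Num.sqrt R) qcvg).
  exact: sqrt_continuous.
pose A k := [set z | range (f k) z /\ (C k < z)%R].
have preA k : f k @^-1` A k = [set t | (C k < f k t)%R].
  by apply/seteqP; split => t /=; [case|split => //; exists t].
have probB k : probZ (p k) (f k) (A k) <= (s k * M)%:E.
  rewrite /probZ preA.
  apply: (@le_trans _ _ (\esum_(t in [set t | (C k < f k t)%R]) ((s k)%:E * (p k t * f k t)%:E))).
    apply: le_esum => t /= Ct; rewrite -EFinM lee_fin.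
    have h1 : (1 < s k * f k t)%R.
      by rewrite -(mulfV (lt0r_neq0 (s0 k))) ltr_pM2l.
    rewrite mulrCA -[X in (X <= _)%R]mulr1 ler_wpM2l // ltW //.
  rewrite esumZ_ ?EFinM; last 2 first.
  - exact: ltW.
  - by move=> t _; rewrite lee_fin mulr_ge0.
  rewrite lee_pmul2l ?lte_fin //.
  apply: le_trans (HM' k); apply: esum_subset => // t _.
  by rewrite lee_fin mulr_ge0.
have probcvg : (fun k => probZ (p k) (f k) (A k)) @ \oo --> 0.
  apply: (@squeeze_cvge _ _ _ _ (fun=> 0) _ (fun k => (s k * M)%:E)).
  - near=> k; rewrite probB andbT /probZ; apply: esum_ge0 => t _; rewrite lee_fin; exact: p0.
  - exact: cvg_cst.
  - apply: cvg_EFin; first by near=> k.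
    have := @cvgMr_tmp R nat _ _ s 0%R M scvg; rewrite mul0r; exact.
have tailcvg := W2 A (fun k z (h : A k z) => proj1 h) probcvg.
have tailE k : \esum_(z in A k) (distZ (p k) (f k) z * (`|z|)%:E)
    = \esum_(t in [set t | (C k < f k t)%R]) (p k t * f k t)%:E.
  rewrite distZ_mul //.
  rewrite preA; apply: eq_esum => t _; rewrite ger0_norm //.
have tailcvg2 : (fun k => \esum_(t in [set t | (C k < f k t)%R]) (p k t * f k t)%:E) @ \oo --> 0.
  by rewrite -(funext tailE).
apply: (@squeeze_cvge _ _ _ _ (fun=> 0) _ (fun k => (s k)%:E + \esum_(t in [set t | (C k < f k t)%R]) (p k t * f k t)%:E)).
- near=> k; apply/andP; split.
    by apply: esum_ge0 => t _; rewrite lee_fin mulr_ge0.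
  apply: le_trans (@split_bound R _ (p k) (f k) (E k) [set t | (C k < f k t)%R] (C k) (p0 k) (f0 k) _ (ltW (C0 k))) _.
    by move=> t.
  rewrite leeD2r //.
  have pifin : pi k \is a fin_num by near: k.
  rewrite -/(pi k) -(fineK pifin) -EFinM lee_fin -/(r k).
  rewrite (@le_trans _ _ (C k * q k)%R) //.
    by rewrite ler_wpM2l ?(ltW (C0 k)) // /q lerDl invr_ge0.
  by rewrite /C -ss mulrA mulVf ?mul1r // lt0r_neq0.
- exact: cvg_cst.
- rewrite -[0]adde0; apply: cvgeD => //.
  apply: cvg_EFin; first by near=> k.
  exact: scvg.
Unshelve. all: by end_near.
Qed.
End UI.

Section Src.
Context {R : realType}.
Local Open Scope ereal_scope.

Lemma esum_pair (A B : choiceType) (a : A * B -> \bar R) :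
  (forall t, 0 <= a t) ->
  \esum_(t in [set: A * B]) a t = \esum_(y in [set: B]) \esum_(x in [set: A]) a (x, y).
Proof.
move=> a0; rewrite (esum_esum (I := [set: B]) (J := fun=> [set: A]) (a := fun y x => a (x, y))); last by [].
rewrite (reindex_esum [set: A * B] _ (fun t => (t.2, t.1))) //.
  by apply: eq_esum => -[x y].
split.
- by [].
- by move=> [x1 y1] [x2 y2] _ _ [] -> ->.
- by move=> [y x] _; exists (x, y).
Qed.

Variables (X Y : countType) (n : nat) (P : src_type X Y n -> R).
Hypothesis P0 : forall t, (0 <= P t)%R.
Hypothesis P1 : \esum_(t in [set: src_type X Y n]) (P t)%:E = 1.

Let sY y := \esum_(x in [set: n.-tuple X]) (P (x, y))%:E.

Lemma sY_sum : \esum_(y in [set: n.-tuple Y]) sY y = 1.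
Proof. by rewrite -P1 (@esum_pair (n.-tuple X) (n.-tuple Y) (fun t => (P t)%:E)) // => t; rewrite lee_fin. Qed.

Lemma sY_ge0 y : 0 <= sY y.
Proof. by apply: esum_ge0 => x _; rewrite lee_fin. Qed.

Lemma sY_le1 y : sY y <= 1.
Proof.
rewrite -sY_sum -(esum_set1 (a := sY) (sY_ge0 y)).
by apply: esum_subset => // z _; exact: sY_ge0.
Qed.

Lemma sY_fin y : sY y \is a fin_num.
Proof. by rewrite ge0_fin_numE ?sY_ge0 // (le_lt_trans (sY_le1 y)) // ltry. Qed.

Lemma margYE y : (margY P y)%:E = sY y.
Proof. by rewrite /margY fineK // sY_fin. Qed.

Lemma P_le_margY t : (P t <= margY P t.2)%R.
Proof.
case: t => x y /=; rewrite -lee_fin margYE.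
rewrite -(esum_set1 (a := fun x => (P (x, y))%:E) (t := x)) ?lee_fin //.
by apply: esum_subset => // z _; rewrite lee_fin.
Qed.

End Src.

Section Mix.
Context {R : realType}.
Local Open Scope ereal_scope.

Lemma esum_lin (T : choiceType) (S : set T) (q1 q2 : T -> R) (a1 a2 : R) :
  (0 <= a1)%R -> (0 <= a2)%R -> (forall t, 0 <= q1 t)%R -> (forall t, 0 <= q2 t)%R ->
  \esum_(t in S) (a1 * q1 t + a2 * q2 t)%:E =
  a1%:E * (\esum_(t in S) (q1 t)%:E) + a2%:E * (\esum_(t in S) (q2 t)%:E).
Proof.
move=> a10 a20 q10 q20.
rewrite (eq_esum (b := fun t => a1%:E * (q1 t)%:E + a2%:E * (q2 t)%:E)); last first.
  by move=> t _; rewrite EFinD !EFinM.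
rewrite esumD; last 2 first.
- by move=> t _; rewrite -EFinM lee_fin mulr_ge0.
- by move=> t _; rewrite -EFinM lee_fin mulr_ge0.
rewrite esumZ_ //; last by move=> t _; rewrite lee_fin.
rewrite esumZ_ //; by move=> t _; rewrite lee_fin.
Qed.

Lemma entr_ge0_real (a m : R) (n : nat) :
  (0 <= a)%R -> (a <= m)%R -> (0 <= n.+1%:R^-1 * log2 ((a / m)^-1))%R.
Proof.
move=> a0 am; apply: mulr_ge0; first by rewrite invr_ge0.
rewrite /log2; apply: divr_ge0; last by rewrite ln_ge0 // ler1n.
have [->|apos] := eqVneq a 0%R.
  by rewrite mul0r invr0 ln0.
have a0' : (0 < a)%R by rewrite lt0r apos.
have m0 : (0 < m)%R by apply: lt_le_trans am.
by rewrite invf_div ln_ge0 // ler_pdivlMr // mul1r.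
Qed.

Lemma key_ineq (a1 a2 p1 p2 m1 m2 : R) (n : nat) :
  (0 < a1)%R -> (0 <= a2)%R -> (0 < p1)%R -> (0 <= p2)%R -> (p1 <= m1)%R -> (0 <= m2)%R ->
  (n.+1%:R^-1 * log2 (((a1 * p1 + a2 * p2) / (a1 * m1 + a2 * m2))^-1) <=
   n.+1%:R^-1 * log2 ((p1 / m1)^-1) + n.+1%:R^-1 * (a2 / (a1 * ln 2)) * (m2 / m1))%R.
Proof.
move=> a10 a20 p10 p20 pm m20.
have m10 : (0 < m1)%R by apply: lt_le_trans pm.
have l2 : (0 < ln (2 : R))%R by rewrite ln_gt0 // ltr1n.
rewrite -mulrA -mulrDr ler_wpM2l ?invr_ge0 //.
rewrite /log2 !invf_div.
have P0 : (0 < a1 * p1 + a2 * p2)%R by rewrite ltr_wpDr ?mulr_ge0 ?mulr_gt0.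
have M0 : (0 < a1 * m1 + a2 * m2)%R by rewrite ltr_wpDr ?mulr_ge0 ?mulr_gt0.
have x0 : (0 <= a2 * m2 / (a1 * m1))%R by rewrite divr_ge0 ?mulr_ge0 // ltW // mulr_gt0.
have E1 : ((a1 * m1 + a2 * m2) / (a1 * p1) = (m1 / p1) * (1 + a2 * m2 / (a1 * m1)))%R.
  by field; rewrite !gt_eqF.
have step1 : (ln ((a1 * m1 + a2 * m2) / (a1 * p1 + a2 * p2)) <=
    ln ((a1 * m1 + a2 * m2) / (a1 * p1)))%R.
  rewrite ler_ln ?posrE ?divr_gt0 ?mulr_gt0 //.
  by rewrite ler_wpM2l ?(ltW M0) // lef_pV2 ?posrE ?mulr_gt0 // lerDl mulr_ge0.
have step2 := le_ln1Dx (lt_le_trans (ltrN10 R) x0).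
have H : (ln ((a1 * m1 + a2 * m2) / (a1 * p1 + a2 * p2)) <=
    ln (m1 / p1) + a2 * m2 / (a1 * m1))%R.
  apply: (le_trans step1); rewrite E1 lnM ?posrE ?divr_gt0 //; last by rewrite ltr_wpDr.
  by rewrite lerD2l.
have -> : (ln (m1 / p1) / ln 2 + a2 / (a1 * ln 2) * (m2 / m1) =
    (ln (m1 / p1) + a2 * m2 / (a1 * m1)) / ln 2)%R.
  by field; rewrite !gt_eqF.
by rewrite ler_wpM2r // invr_ge0 ltW.
Qed.
End Mix.

Section Core.
Context {R : realType}.
Local Open Scope ereal_scope.

Lemma sub_bound (T : choiceType) (E : set T) (p f g h : T -> R) :
  (forall t, 0 <= p t)%R -> (forall t, 0 <= f t)%R -> (forall t, 0 <= h t)%R ->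
  (forall t, p t * g t <= p t * f t + p t * h t)%R ->
  \esum_(t in E) (p t * g t)%:E <=
  \esum_(t in E) (p t * f t)%:E + \esum_(t in [set: T]) (p t * h t)%:E.
Proof.
move=> p0 f0 h0 le.
apply: (@le_trans _ _ (\esum_(t in E) ((p t * f t)%:E + (p t * h t)%:E))).
  by apply: le_esum => t _; rewrite -EFinD lee_fin.
rewrite esumD; last 2 first.
- by move=> t _; rewrite lee_fin; apply: mulr_ge0.
- by move=> t _; rewrite lee_fin; apply: mulr_ge0.
by rewrite leeD2l //; apply: esum_subset => // t _; rewrite lee_fin; apply: mulr_ge0.
Qed.

Lemma harm_cvg (c : R) : ((k.+1%:R^-1 * c)%R%:E : \bar R) @[k --> \oo] --> 0.
Proof.
apply: cvg_EFin; first by near=> k.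
have := @cvgMr_tmp R nat _ _ (fun k => (k.+1%:R^-1)%R) 0%R c (@cvg_harmonic R).
by rewrite mul0r => H; apply: H.
Unshelve. all: by end_near.
Qed.

Lemma mix_core (Tk : nat -> countType) (p1 p2 f1 f2 fm h1 h2 : forall k, Tk k -> R)
  (a1 a2 c1 c2 : R) :
  (0 < a1)%R -> (0 < a2)%R -> (0 <= c1)%R -> (0 <= c2)%R ->
  (forall k t, 0 <= p1 k t)%R -> (forall k t, 0 <= p2 k t)%R ->
  (forall k t, 0 <= f1 k t)%R -> (forall k t, 0 <= f2 k t)%R ->
  (forall k t, 0 <= fm k t)%R ->
  (forall k t, 0 <= h1 k t)%R -> (forall k t, 0 <= h2 k t)%R ->
  condW p1 f1 -> condW p2 f2 ->
  (forall k t, p1 k t * fm k t <= p1 k t * f1 k t + p1 k t * h1 k t)%R ->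
  (forall k t, p2 k t * fm k t <= p2 k t * f2 k t + p2 k t * h2 k t)%R ->
  (forall k, \esum_(t in [set: Tk k]) (p1 k t * h1 k t)%:E <= (k.+1%:R^-1 * c1)%R%:E) ->
  (forall k, \esum_(t in [set: Tk k]) (p2 k t * h2 k t)%:E <= (k.+1%:R^-1 * c2)%R%:E) ->
  condW (fun k t => a1 * p1 k t + a2 * p2 k t)%R fm.
Proof.
move=> a10 a20 c10 c20 p10 p20 f10 f20 fm0 h10 h20 W1 W2 le1 le2 hb1 hb2.
have W1' := W1; have W2' := W2.
move: W1' W2' => [[M1 HM1] _] [[M2 HM2] _].
have kc k (c : R) : (0 <= c)%R -> (k.+1%:R^-1 * c <= c)%R.
  by move=> c0; apply: ler_piMl => //; rewrite invf_le1 ?ltr0n // ler1n.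
have B1 k : \esum_(t in [set: Tk k]) (p1 k t * fm k t)%:E <= (M1 + c1)%:E.
  apply: le_trans (@sub_bound (Tk k) [set: Tk k] (p1 k) (f1 k) (fm k) (h1 k) (p10 k) (f10 k) (h10 k) (le1 k)) _.
  rewrite EFinD leeD //; first by rewrite -expZ_ge0 // ltW.
  by apply: le_trans (hb1 k) _; rewrite lee_fin kc.
have B2 k : \esum_(t in [set: Tk k]) (p2 k t * fm k t)%:E <= (M2 + c2)%:E.
  apply: le_trans (@sub_bound (Tk k) [set: Tk k] (p2 k) (f2 k) (fm k) (h2 k) (p20 k) (f20 k) (h20 k) (le2 k)) _.
  rewrite EFinD leeD //; first by rewrite -expZ_ge0 // ltW.
  by apply: le_trans (hb2 k) _; rewrite lee_fin kc.
have pm0 k t : (0 <= a1 * p1 k t + a2 * p2 k t)%R by rewrite addr_ge0 // mulr_ge0 // ltW.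
have lin k (E : set (Tk k)) : \esum_(t in E) ((a1 * p1 k t + a2 * p2 k t) * fm k t)%:E =
   a1%:E * (\esum_(t in E) (p1 k t * fm k t)%:E) + a2%:E * (\esum_(t in E) (p2 k t * fm k t)%:E).
  rewrite -esum_lin ?ltW //; last 2 first.
  - by move=> t; rewrite mulr_ge0.
  - by move=> t; rewrite mulr_ge0.
  by apply: eq_esum => t _; congr (_%:E); ring.
split.
  exists (a1 * (M1 + c1) + a2 * (M2 + c2) + 1)%R => k.
  rewrite expZ_ge0 // lin.
  apply: (@le_lt_trans _ _ (a1 * (M1 + c1) + a2 * (M2 + c2))%:E).
    by rewrite EFinD !EFinM leeD // lee_pmul2l ?lte_fin.
  by rewrite lte_fin ltrDl ltr01.
move=> A hA probcvg.
pose E k := fm k @^-1` A k.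
have probE k : probZ (fun t => a1 * p1 k t + a2 * p2 k t)%R (fm k) (A k) =
  a1%:E * (\esum_(t in E k) (p1 k t)%:E) + a2%:E * (\esum_(t in E k) (p2 k t)%:E).
  by rewrite /probZ esum_lin ?ltW.
have ge0E1 k : 0 <= \esum_(t in E k) (p1 k t)%:E by apply: esum_ge0 => t _; rewrite lee_fin.
have ge0E2 k : 0 <= \esum_(t in E k) (p2 k t)%:E by apply: esum_ge0 => t _; rewrite lee_fin.
have P1cvg : (fun k => \esum_(t in E k) (p1 k t)%:E) @ \oo --> 0.
  apply: (@squeeze_cvge _ _ _ _ (fun=> 0) _ (fun k => (a1^-1)%R%:E * probZ (fun t => a1 * p1 k t + a2 * p2 k t)%R (fm k) (A k))).
  - near=> k; rewrite ge0E1 /= probE.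
    apply: (@le_trans _ _ ((a1^-1)%R%:E * (a1%:E * (\esum_(t in E k) (p1 k t)%:E)))).
      by rewrite muleA -EFinM mulVf ?mul1e // lt0r_neq0.
    by rewrite lee_pmul2l ?lte_fin ?invr_gt0 // leeDl // mule_ge0 // lee_fin ltW.
  - exact: cvg_cst.
  - rewrite -(mule0 (a1^-1)%R%:E); exact: cvgeZl.
have P2cvg : (fun k => \esum_(t in E k) (p2 k t)%:E) @ \oo --> 0.
  apply: (@squeeze_cvge _ _ _ _ (fun=> 0) _ (fun k => (a2^-1)%R%:E * probZ (fun t => a1 * p1 k t + a2 * p2 k t)%R (fm k) (A k))).
  - near=> k; rewrite ge0E2 /= probE.
    apply: (@le_trans _ _ ((a2^-1)%R%:E * (a2%:E * (\esum_(t in E k) (p2 k t)%:E)))).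
      by rewrite muleA -EFinM mulVf ?mul1e // lt0r_neq0.
    by rewrite lee_pmul2l ?lte_fin ?invr_gt0 // leeDr // mule_ge0 // lee_fin ltW.
  - exact: cvg_cst.
  - rewrite -(mule0 (a2^-1)%R%:E); exact: cvgeZl.
have X1 : (fun k => \esum_(t in E k) (p1 k t * fm k t)%:E) @ \oo --> 0.
  apply: (@squeeze_cvge _ _ _ _ (fun=> 0) _ (fun k => \esum_(t in E k) (p1 k t * f1 k t)%:E + (k.+1%:R^-1 * c1)%R%:E)).
  - near=> k; apply/andP; split.
      by apply: esum_ge0 => t _; rewrite lee_fin mulr_ge0.
    apply: le_trans (@sub_bound (Tk k) (E k) (p1 k) (f1 k) (fm k) (h1 k) (p10 k) (f10 k) (h10 k) (le1 k)) _.
    by rewrite leeD2l.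
  - exact: cvg_cst.
  - rewrite -[0]adde0; apply: cvgeD => //; last exact: harm_cvg.
    exact: UI_lemma.
have X2 : (fun k => \esum_(t in E k) (p2 k t * fm k t)%:E) @ \oo --> 0.
  apply: (@squeeze_cvge _ _ _ _ (fun=> 0) _ (fun k => \esum_(t in E k) (p2 k t * f2 k t)%:E + (k.+1%:R^-1 * c2)%R%:E)).
  - near=> k; apply/andP; split.
      by apply: esum_ge0 => t _; rewrite lee_fin mulr_ge0.
    apply: le_trans (@sub_bound (Tk k) (E k) (p2 k) (f2 k) (fm k) (h2 k) (p20 k) (f20 k) (h20 k) (le2 k)) _.
    by rewrite leeD2l.
  - exact: cvg_cst.
  - rewrite -[0]adde0; apply: cvgeD => //; last exact: harm_cvg.
    exact: UI_lemma.
have goalE k : \esum_(z in A k) (distZ (fun t => a1 * p1 k t + a2 * p2 k t)%R (fm k) z * (`|z|)%:E) =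
    a1%:E * (\esum_(t in E k) (p1 k t * fm k t)%:E) + a2%:E * (\esum_(t in E k) (p2 k t * fm k t)%:E).
  rewrite distZ_mul // -lin; apply: eq_esum => t _; rewrite ger0_norm //.
rewrite (funext goalE).
have -> : (0 : \bar R) = a1%:E * 0 + a2%:E * 0 by rewrite !mule0 adde0.
apply: cvgeD => //; exact: cvgeZl.
Unshelve. all: by end_near.
Qed.
End Core.

Section Fin.
Context {R : realType} {X Y : countType}.
Local Open Scope ereal_scope.

Lemma hsum n (Q1 Q2 : src_type X Y n -> R) (K : R) :
  (forall t, 0 <= Q1 t)%R -> (forall t, 0 <= Q2 t)%R ->
  \esum_(t in [set: src_type X Y n]) (Q1 t)%:E = 1 ->
  \esum_(t in [set: src_type X Y n]) (Q2 t)%:E = 1 ->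
  (forall y, 0 < margY Q1 y)%R -> (0 <= K)%R ->
  \esum_(t in [set: src_type X Y n]) (Q1 t * (K * (margY Q2 t.2 / margY Q1 t.2)))%:E = K%:E.
Proof.
move=> Q10 Q20 T1 T2 m0 K0.
have m20 y : (0 <= margY Q2 y)%R.
  rewrite -lee_fin margYE //; apply: esum_ge0 => x _; rewrite lee_fin; exact: Q20.
have r0 y : (0 <= K * (margY Q2 y / margY Q1 y))%R.
  by apply: mulr_ge0 => //; apply: divr_ge0 => //; exact: ltW.
rewrite (@esum_pair R (n.-tuple X) (n.-tuple Y) (fun t => (Q1 t * (K * (margY Q2 t.2 / margY Q1 t.2)))%:E)); last first.
  by move=> t; rewrite lee_fin mulr_ge0.
rewrite (eq_esum (b := fun y => (K * margY Q2 y)%:E)); last first.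
  move=> y _ /=.
  rewrite (eq_esum (b := fun x => (K * (margY Q2 y / margY Q1 y))%:E * (Q1 (x, y))%:E)); last first.
    by move=> x _; rewrite -EFinM mulrC.
  rewrite esumZ_ //; last by move=> x _; rewrite lee_fin.
  rewrite -(@margYE R X Y n Q1 Q10 T1) -EFinM; congr (_%:E).
  by rewrite -!mulrA mulVf ?mulr1 // gt_eqF.
rewrite (eq_esum (b := fun y => K%:E * \esum_(x in [set: n.-tuple X]) (Q2 (x, y))%:E)); last first.
  by move=> y _; rewrite EFinM margYE.
rewrite esumZ_ //; last by move=> y _; apply: esum_ge0 => x _; rewrite lee_fin.
by rewrite (@sY_sum R X Y n Q2 Q20 T2) mule1.
Qed.


Lemma entr_ge0 (P : forall n, src_type X Y n -> R) :
  (forall n t, 0 <= P n t)%R -> (forall n, \esum_(t in [set: src_type X Y n]) (P n t)%:E = 1) ->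
  forall k (t : src_type X Y k.+1), (0 <= entr_info P t)%R.
Proof.
move=> P0 PT k t; rewrite /entr_info /condP.
apply: entr_ge0_real => //; exact: P_le_margY.
Qed.

Lemma mix_total (P1 P2 : forall n, src_type X Y n -> R) (a1 a2 : R) n :
  (0 <= a1)%R -> (0 <= a2)%R -> (a1 + a2 = 1)%R ->
  (forall t, 0 <= P1 n t)%R -> (forall t, 0 <= P2 n t)%R ->
  \esum_(t in [set: src_type X Y n]) (P1 n t)%:E = 1 ->
  \esum_(t in [set: src_type X Y n]) (P2 n t)%:E = 1 ->
  \esum_(t in [set: src_type X Y n]) (mixture a1 a2 P1 P2 t)%:E = 1.
Proof.
move=> a10 a20 a12 P10 P20 T1 T2; rewrite /mixture esum_lin // T1 T2 !mule1.
by rewrite -EFinD a12.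
Qed.

Lemma margY_mix (P1 P2 : forall n, src_type X Y n -> R) (a1 a2 : R) n y :
  (0 <= a1)%R -> (0 <= a2)%R ->
  (forall t, 0 <= P1 n t)%R -> (forall t, 0 <= P2 n t)%R ->
  \esum_(t in [set: src_type X Y n]) (P1 n t)%:E = 1 ->
  \esum_(t in [set: src_type X Y n]) (P2 n t)%:E = 1 ->
  margY (mixture a1 a2 P1 P2 (n:=n)) y = (a1 * margY (P1 n) y + a2 * margY (P2 n) y)%R.
Proof.
move=> a10 a20 P10 P20 T1 T2; rewrite {1}/margY /mixture esum_lin //.
by rewrite -(@margYE R X Y n (P1 n) P10 T1) -(@margYE R X Y n (P2 n) P20 T2) -!EFinM -EFinD.
Qed.

End Fin.

Theorem lemma1 (R : realType) (X Y : countType)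
  (P1 P2 : forall n, src_type X Y n -> R) (a1 a2 : R) :
  is_source P1 -> is_source P2 ->
  0 < a1 -> 0 < a2 -> a1 + a2 = 1 ->
  entr_seq_W P1 -> entr_seq_W P2 ->
  entr_seq_W (mixture a1 a2 P1 P2).
Proof.
move=> S1 S2 a10 a20 a12 W1 W2.
have P10 n t : 0 <= P1 n t by case: (S1 n).
have P20 n t : 0 <= P2 n t by case: (S2 n).
have T1 n : (\esum_(t in [set: src_type X Y n]) (P1 n t)%:E = 1)%E by case: (S1 n) => _ [].
have T2 n : (\esum_(t in [set: src_type X Y n]) (P2 n t)%:E = 1)%E by case: (S2 n) => _ [].
have M1 n y : 0 < margY (P1 n) y by case: (S1 n) => _ [_ [_]].
have M2 n y : 0 < margY (P2 n) y by case: (S2 n) => _ [_ [_]].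
have Pm0 n (t : src_type X Y n) : 0 <= mixture a1 a2 P1 P2 t.
  by rewrite /mixture addr_ge0 // mulr_ge0 // ltW.
have Tm n := @mix_total R X Y P1 P2 a1 a2 n (ltW a10) (ltW a20) a12 (P10 n) (P20 n) (T1 n) (T2 n).
have a10' := ltW a10; have a20' := ltW a20.
have l2 : 0 < ln (2 : R) by rewrite ln_gt0 // ltr1n.
pose c1 := a2 / (a1 * ln 2).
pose c2 := a1 / (a2 * ln 2).
have c10 : 0 <= c1 by rewrite divr_ge0 ?mulr_ge0 // ltW.
have c20 : 0 <= c2 by rewrite divr_ge0 ?mulr_ge0 // ltW.
pose h1 := fun k (t : src_type X Y k.+1) => k.+1%:R^-1 * c1 * (margY (P2 k.+1) t.2 / margY (P1 k.+1) t.2).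
pose h2 := fun k (t : src_type X Y k.+1) => k.+1%:R^-1 * c2 * (margY (P1 k.+1) t.2 / margY (P2 k.+1) t.2).
apply: (@mix_core R (fun k => src_type X Y k.+1) (fun k => P1 k.+1) (fun k => P2 k.+1)
  (entr_info P1) (entr_info P2) (entr_info (mixture a1 a2 P1 P2)) h1 h2 a1 a2 c1 c2) => //.
- exact: entr_ge0.
- exact: entr_ge0.
- exact: entr_ge0.
- move=> k t; apply: mulr_ge0; first by apply: mulr_ge0 => //; rewrite invr_ge0.
  by apply: divr_ge0; apply: ltW; [exact: M2|exact: M1].
- move=> k t; apply: mulr_ge0; first by apply: mulr_ge0 => //; rewrite invr_ge0.
  by apply: divr_ge0; apply: ltW; [exact: M1|exact: M2].
- move=> k t; have := P10 k.+1 t; rewrite le0r => /orP[/eqP->|pos].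
    by rewrite !mul0r addr0.
  rewrite -mulrDr; apply: ler_wpM2l; first exact: ltW.
  rewrite /entr_info /condP margY_mix // /mixture /h1.
  apply: key_ineq => //; [exact: P_le_margY|exact: (ltW (M2 _ _))].
- move=> k t; have := P20 k.+1 t; rewrite le0r => /orP[/eqP->|pos].
    by rewrite !mul0r addr0.
  rewrite -mulrDr; apply: ler_wpM2l; first exact: ltW.
  rewrite /entr_info /condP margY_mix // /mixture /h2.
  rewrite (addrC (a1 * P1 k.+1 t)) (addrC (a1 * margY (P1 k.+1) t.2)).
  apply: key_ineq => //; [exact: P_le_margY|exact: (ltW (M1 _ _))].
- move=> k; rewrite /h1 hsum //; exact: mulr_ge0.
- move=> k; rewrite /h2 hsum //; exact: mulr_ge0.
Qed.
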